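(* Every Camina group is a generalized B-group.
   Context: For a finite group $G$ with identity $e$ and $X\subseteq G$, write $\underline{X}=\sum_{x\in X}x\in\mathbb{Z}G$. A subring $\mathcal{A}$ of $\mathbb{Z}G$ is an S-ring over $G$ if there is a partition $\mathcal{S}(\mathcal{A})$ of $G$ (basic sets) such that $\{e\}\in\mathcal{S}(\mathcal{A})$, $X\in\mathcal{S}(\mathcal{A})\Rightarrow X^{-1}\in\mathcal{S}(\mathcal{A})$, and $\mathcal{A}$ is the $\mathbb{Z}$-span of $\{\underline{X}: X\in\mathcal{S}(\mathcal{A})\}$. An $\mathcal{A}$-subgroup is a subgroup of $G$ that is a union of basic sets; $\mathcal{A}$ is primitive if its only $\mathcal{A}$-subgroups are $\{e\}$ and $G$. $\mathcal{A}$ is central if $\mathcal{A}\subseteq\mathcal{Z}(\mathbb{Z}G)$ (the center of $\mathbb{Z}G$, which is itself an S-ring whose basic sets are the conjugacy classes). The trivial S-ring is $\mathbb{Z}e+\mathbb{Z}\underline{G}$. A central S-ring over $G$ is proper if it is different from both $\mathcal{Z}(\mathbb{Z}G)$ and the trivial S-ring. A finite group $G$ is a generalized B-group if no proper central S-ring over $G$ is primitive. A finite group $G$ is a Camina group if it has a normal subgroup $H$ with $\{e\}\neq H\neq G$ such that every coset $xH$ with $x\notin H$ is contained in a single conjugacy class of $G$. *)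

(* Defs.v *)
From HB Require Import structures.
From mathcomp Require Import all_boot all_order all_algebra all_fingroup.
Set Implicit Arguments. Unset Strict Implicit. Unset Printing Implicit Defensive.
Import GRing.Theory.

Section SRing.
Variable gT : finGroupType.

(* Elements of the group ring Z[gT] are integer-valued functions on gT;
   ZG G is the subring of those supported on G. *)
Definition grel := {ffun gT -> int}.

Definition inZG (G : {set gT}) (a : grel) : Prop :=
  forall x, x \notin G -> a x = 0%R.

Definition gmul (G : {set gT}) (a b : grel) : grel :=
  [ffun g => (\sum_(h in G) a h * b (h^-1 * g)%g)%R].

Definition uline (X : {set gT}) : grel := [ffun x => Posz (nat_of_bool (x \in X))].

Definition span (P : {set {set gT}}) (a : grel) : Prop :=
  exists c : {set gT} -> int, a = (\sum_(X in P) uline X *~ c X)%R.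

(* P is the set of basic sets of an S-ring over G (the S-ring being span P) *)
Definition is_Sring (G : {set gT}) (P : {set {set gT}}) : Prop :=
  [/\ partition P G,
      [set 1%g] \in P,
      (forall X, X \in P -> X^-1%g \in P) &
      (forall a b, span P a -> span P b -> span P (gmul G a b))].

Definition centerZG (G : {set gT}) (a : grel) : Prop :=
  inZG G a /\ forall b, inZG G b -> gmul G a b = gmul G b a.

Definition trivZG (G : {set gT}) (a : grel) : Prop :=
  exists m n : int, a = (uline [set 1%g] *~ m + uline G *~ n)%R.

Definition central_Sring (G : {set gT}) (P : {set {set gT}}) : Prop :=
  forall a, span P a -> centerZG G a.

Definition proper_Sring (G : {set gT}) (P : {set {set gT}}) : Prop :=
  ~ (forall a, span P a <-> centerZG G a) /\
  ~ (forall a, span P a <-> trivZG G a).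

Definition Asubgroup (G : {set gT}) (P : {set {set gT}}) (H : {group gT}) : Prop :=
  H \subset G /\ exists Q : {set {set gT}}, Q \subset P /\ (H : {set gT}) = cover Q.

Definition primitive_Sring (G : {set gT}) (P : {set {set gT}}) : Prop :=
  forall H : {group gT}, Asubgroup G P H -> (H :=: 1)%g \/ (H :=: G).

Definition generalized_B_group (G : {group gT}) : Prop :=
  forall P : {set {set gT}}, is_Sring G P -> central_Sring G P ->
    proper_Sring G P -> ~ primitive_Sring G P.

Definition Camina_group (G : {group gT}) : Prop :=
  exists H : {group gT},
    [/\ (H <| G)%g, (H :!=: 1)%g, H :!=: G &
        forall x, x \in G :\: H -> (x *: H \subset x ^: G)%g].

End SRing.

(* Main.v *)
Require Import Defs.
From mathcomp Require Import all_boot all_order all_algebra all_fingroup.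
From mathcomp Require Import zify.
Set Implicit Arguments. Unset Strict Implicit. Unset Printing Implicit Defensive.
Import GRing.Theory.
Local Open Scope group_scope.

Lemma dvd_rinv (gT : finGroupType) (H : {group gT}) (A : {set gT}) :
  (forall u k, u \in A -> k \in H -> u * k \in A) -> (#|H| %| #|A|)%N.
Proof.
move=> hA.
rewrite -[#|A|]sum1_card (partition_big_imset (fun x => x *: H)) /=.
rewrite dvdn_sum // => _ /imsetP[a Aa ->].
have ->: (\sum_(x in A | x *: H == a *: H) 1 = #|a *: H|)%N.
  rewrite -sum1_card; apply: eq_bigl => x.
  apply/andP/idP.
    by case=> _ /eqP <-; rewrite lcoset_refl.
  move=> xa; split; last by apply/eqP/lcoset_eqP.
  by case/lcosetP: xa => k Hk ->; apply: hA.
by rewrite card_lcoset.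
Qed.

Lemma gmulE (gT : finGroupType) (G A B : {set gT}) g :
  gmul G (uline A) (uline B) g = Posz #|[set h in G | (h \in A) && (h^-1 * g \in B)]|.
Proof.
rewrite /gmul ffunE -sum1dep_card.
rewrite (big_morph Posz PoszD (erefl _)) big_mkcond [RHS]big_mkcond /=.
apply: eq_bigr => h _; rewrite !ffunE.
by case: (h \in G); case: (h \in A); case: (h^-1 * g \in B).
Qed.

Lemma partP (gT : finGroupType) (P : {set {set gT}}) (G : {set gT}) :
  partition P G -> [/\ cover P = G, trivIset P & set0 \notin P].
Proof. by case/and3P=> /eqP ? ? ?. Qed.

Lemma blk_sub (gT : finGroupType) (P : {set {set gT}}) (G X : {set gT}) :
  partition P G -> X \in P -> X \subset G.
Proof.
case/partP=> <- _ _ XP; exact: bigcup_sup.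
Qed.

Lemma blk_uniq (gT : finGroupType) (P : {set {set gT}}) (G X Y : {set gT}) g :
  partition P G -> X \in P -> Y \in P -> g \in X -> g \in Y -> X = Y.
Proof.
case/partP=> _ tP _ XP YP gX gY.
by rewrite -(def_pblock tP XP gX) (def_pblock tP YP gY).
Qed.

Lemma span_val (gT : finGroupType) (P : {set {set gT}}) (G X : {set gT}) c g :
  partition P G -> X \in P -> g \in X ->
  (\sum_(Y in P) uline Y *~ c Y)%R g = c X.
Proof.
move=> pP XP gX; rewrite sum_ffunE (bigD1 X) //= big1 ?GRing.addr0.
  by rewrite ffunMzE ffunE gX mulrzz GRing.mul1r.
move=> Y /andP[YP nYX]; rewrite ffunMzE ffunE.
case gY: (g \in Y) => //.
  by rewrite (blk_uniq pP YP XP gY gX) eqxx in nYX.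
by rewrite mul0rz.
Qed.

Lemma span_out (gT : finGroupType) (P : {set {set gT}}) (G : {set gT}) c g :
  partition P G -> g \notin G ->
  (\sum_(Y in P) uline Y *~ c Y)%R g = 0%R.
Proof.
move=> pP gG; rewrite sum_ffunE big1 // => Y YP.
rewrite ffunMzE ffunE.
case gY: (g \in Y); last by rewrite mul0rz.
by rewrite (subsetP (blk_sub pP YP) _ gY) in gG.
Qed.

Lemma spanP (gT : finGroupType) (P : {set {set gT}}) (G : {set gT}) a :
  partition P G -> Defs.span P a <->
  (inZG G a /\ forall X, X \in P -> forall x y, x \in X -> y \in X -> a x = a y).
Proof.
move=> pP; split.
  case=> c ->; split; first by move=> x xG; rewrite (span_out _ pP).
  by move=> X XP x y xX yX; rewrite !(span_val _ pP XP).
case=> aZ aC; exists (fun X => a (repr X)); apply/ffunP => g.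
case gG: (g \in G); last by rewrite (span_out _ pP) ?gG // aZ ?gG.
have [cP tP s0P] := partP pP.
have gc: g \in cover P by rewrite cP.
have bP := pblock_mem gc.
have gb : g \in pblock P g by rewrite mem_pblock.
rewrite (span_val _ pP bP gb).
exact: aC _ bP _ _ gb (mem_repr _ gb).
Qed.

Lemma uline_span (gT : finGroupType) (P : {set {set gT}}) (G X : {set gT}) :
  partition P G -> X \in P -> Defs.span P (uline X).
Proof.
move=> pP XP; apply/(spanP _ pP); split.
  move=> x xG; rewrite ffunE; case xX: (x \in X) => //.
  by rewrite (subsetP (blk_sub pP XP) _ xX) in xG.
move=> Y YP x y xY yY; rewrite !ffunE.
case xX: (x \in X); case yX: (y \in X) => //.
  by move: yY; rewrite -(blk_uniq pP XP YP xX xY) yX.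
by move: xY; rewrite -(blk_uniq pP XP YP yX yY) xX.
Qed.

Definition Tset (gT : finGroupType) (G A B : {set gT}) g :=
  [set h in G | (h \in A) && (h^-1 * g \in B)].

Lemma Tconst (gT : finGroupType) (G : {group gT}) P X Y Z g g' :
  is_Sring G P -> X \in P -> Y \in P -> Z \in P -> g \in Z -> g' \in Z ->
  #|Tset G X Y g| = #|Tset G X Y g'|.
Proof.
case=> pP _ _ mP XP YP ZP gZ gZ'.
have sp := mP _ _ (uline_span pP XP) (uline_span pP YP).
case/(spanP _ pP): sp => _ /(_ Z ZP g g' gZ gZ').
by rewrite !gmulE => -[].
Qed.

Lemma conj_inv (gT : finGroupType) (G : {group gT}) P X x g :
  is_Sring G P -> central_Sring G P -> X \in P -> x \in X -> g \in G -> x ^ g \in X.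
Proof.
move=> sP cP XP xX gG; have [pP _ _ _] := sP.
have [_ comm] := cP _ (uline_span pP XP).
have bZ : inZG G (uline [set g]).
  move=> y yG; rewrite ffunE inE; case: (y =P g) => [eyg|] //.
  by rewrite eyg gG in yG.
have E := congr1 (fun f : Defs.grel gT => f (x * g)) (comm _ bZ).
rewrite /= !gmulE in E; move/eqP: E; rewrite eqz_nat => /eqP E.
case: (boolP (x ^ g \in X)) => // nX; exfalso.
have S2 : [set h in G | (h \in [set g]) && (h^-1 * (x * g) \in X)] = set0.
  apply/setP => h; rewrite !inE; case: (h =P g) => [->|]; last by rewrite /= andbF.
  by rewrite /= -conjgE (negbTE nX) andbF.
rewrite S2 cards0 in E; move/eqP: E; rewrite cards_eq0 => /eqP/setP/(_ x).
rewrite !inE (subsetP (blk_sub pP XP) _ xX) xX mulKg eqxx //.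
Qed.

Lemma sat (gT : finGroupType) (G H : {group gT}) P X w k :
  is_Sring G P -> central_Sring G P -> H <| G ->
  (forall x, x \in G :\: H -> x *: H \subset x ^: G) ->
  X \in P -> w \in X -> w \notin H -> k \in H -> (w * k \in X) /\ (k * w \in X).
Proof.
move=> sP cP nH hc XP wX wH kH; have [pP _ _ _] := sP.
have wG := subsetP (blk_sub pP XP) _ wX.
have wkX : forall k', k' \in H -> w * k' \in X.
  move=> k' k'H.
  have wk : w * k' \in w *: H by rewrite mem_lcoset mulKg.
  have : w \in G :\: H by rewrite inE wH wG.
  move/hc/subsetP/(_ _ wk)/imsetP => [g gG ->].
  exact: conj_inv sP cP XP wX gG.
split; first exact: wkX.
have -> : k * w = w * (k ^ w) by rewrite conjgE mulKVg.
apply: wkX; rewrite memJ_norm //.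
by case/andP: nH => _ /subsetP; apply.
Qed.

Lemma pb_mem (gT : finGroupType) (P : {set {set gT}}) (G : {set gT}) x :
  partition P G -> x \in G -> pblock P x \in P /\ x \in pblock P x.
Proof.
case/partP=> cP _ _ xG; have xc : x \in cover P by rewrite cP.
by rewrite mem_pblock xc pblock_mem.
Qed.

Lemma not_prim (gT : finGroupType) (G : {group gT}) P (K : {group gT}) :
  partition P G -> K \subset G ->
  (forall X, X \in P -> forall x y, x \in X -> y \in X -> x \in K -> y \in K) ->
  ~ (K :=: 1) -> ~ (K :=: G) -> ~ primitive_Sring G P.
Proof.
move=> pP sKG cK n1 nG prim.
have AK : Asubgroup G P K.
  split=> //; exists [set X in P | X \subset K]; split.
    by apply/subsetP => X; rewrite inE => /andP[].
  apply/setP => g; apply/idP/bigcupP.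
    move=> gK; have gG := subsetP sKG _ gK.
    have [bP gb] := pb_mem pP gG.
    exists (pblock P g) => //; rewrite inE bP /=.
    by apply/subsetP => y yb; apply: cK bP _ _ gb yb gK.
  by case=> X; rewrite inE => /andP[_ /subsetP]; apply.
by case: (prim K AK).
Qed.

Lemma caseA (gT : finGroupType) (G H : {group gT}) P W :
  is_Sring G P -> H \subset G -> H :!=: G ->
  W \in P -> W != [set 1%g] -> W \subset H -> ~ primitive_Sring G P.
Proof.
move=> sP sHG nHG WP W1 WH; have [pP P1 _ _] := sP.
have [cP tP s0P] := partP pP.
pose K := [set g in G | pblock P g \subset H].
have gK : group_set K.
  apply/group_setP; split.
    rewrite inE group1 (def_pblock tP P1 (set11 1)).
    by rewrite sub1set group1.
  move=> x y; rewrite !inE => /andP[xG xH] /andP[yG yH].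
  have xyG : x * y \in G by rewrite groupM.
  rewrite xyG /=.
  have [xP xb] := pb_mem pP xG; have [yP yb] := pb_mem pP yG.
  have [zP zb] := pb_mem pP xyG.
  apply/subsetP => z zZ.
  have E := Tconst sP xP yP zP zb zZ.
  have : x \in Tset G (pblock P x) (pblock P y) (x * y).
    by rewrite inE xG xb mulKg yb.
  move=> xT; have : 0 < #|Tset G (pblock P x) (pblock P y) z|.
    by rewrite -E card_gt0; apply/set0Pn; exists x.
  rewrite card_gt0 => /set0Pn[h]; rewrite inE => /and3P[hG hX hY].
  have -> : z = h * (h^-1 * z) by rewrite mulKVg.
  by rewrite groupM //; [apply: (subsetP xH) | apply: (subsetP yH)].
pose KG := Group gK.
have sKH : KG \subset H.
  apply/subsetP => g; rewrite inE => /andP[gG /subsetP sb].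
  by apply: sb; have [] := pb_mem pP gG.
have sKG : KG \subset G by apply/subsetP => g; rewrite inE => /andP[].
apply: (not_prim pP sKG).
- move=> X XP x y xX yX; rewrite !inE => /andP[_].
  have yG := subsetP (blk_sub pP XP) _ yX.
  by rewrite yG (def_pblock tP XP xX) (def_pblock tP XP yX).
- move=> K1.
  have : W != set0 by apply: contraNneq s0P => <-.
  case/set0Pn => w wW.
  have wG := subsetP (blk_sub pP WP) _ wW.
  have : w \in KG by rewrite inE wG (def_pblock tP WP wW).
  rewrite K1 inE => /eqP w1; rewrite w1 in wW.
  by move: W1; rewrite -(def_pblock tP WP wW) (def_pblock tP P1 (set11 1)) eqxx.
- move=> KGe; move: nHG; rewrite eqEsubset sHG /= -KGe sKH //.
Qed.

Lemma caseB (gT : finGroupType) (G H : {group gT}) P X :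
  is_Sring G P -> central_Sring G P -> H <| G ->
  (forall x, x \in G :\: H -> x *: H \subset x ^: G) -> H :!=: 1 ->
  X \in P -> [disjoint X & H] -> ~ primitive_Sring G P.
Proof.
move=> sP cP nH hc H1 XP dXH; have [pP P1 Pinv _] := sP.
have [cvP tP s0P] := partP pP.
have sHG : H \subset G by case/andP: nH.
pose S := [set g in G | [forall x in X, x * g \in X]].
have gS : group_set S.
  apply/group_setP; split.
    by rewrite inE group1; apply/forall_inP => x xX; rewrite mulg1.
  move=> g g'; rewrite !inE => /andP[gG /forall_inP sg] /andP[g'G /forall_inP sg'].
  rewrite groupM //; apply/forall_inP => x xX.
  by rewrite mulgA; apply: sg'; apply: sg.
pose SG := Group gS.
have sSG : SG \subset G by apply/subsetP => g; rewrite inE => /andP[].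
have sHS : H \subset SG.
  apply/subsetP => k kH; rewrite inE (subsetP sHG _ kH) /=.
  apply/forall_inP => x xX.
  by case: (sat sP cP nH hc XP xX (negbT (disjointFr dXH xX)) kH).
have XiP := Pinv _ XP.
have sXi := blk_sub pP XiP.
have Tsub : forall g, Tset G X^-1 X g \subset X^-1.
  by move=> g; apply/subsetP => h; rewrite inE => /and3P[].
have TS : forall g, g \in G -> (g \in SG) = (#|X^-1| <= #|Tset G X^-1 X g|).
  move=> g gG; apply/idP/idP.
    rewrite inE gG => /forall_inP sg; apply: subset_leq_card.
    apply/subsetP => h hXi; rewrite inE (subsetP sXi _ hXi) hXi /=.
    by apply: sg; rewrite inE in hXi.
  move=> le; have : Tset G X^-1 X g == X^-1 by rewrite eqEcard Tsub.
  move/eqP => eT; rewrite inE gG; apply/forall_inP => x xX.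
  have : x^-1 \in Tset G X^-1 X g by rewrite eT inE invgK.
  by rewrite inE invgK => /and3P[].
apply: (not_prim pP sSG).
- move=> Y YP x y xY yY.
  have xG := subsetP (blk_sub pP YP) _ xY; have yG := subsetP (blk_sub pP YP) _ yY.
  by rewrite (TS _ xG) (TS _ yG) (Tconst sP XiP XP YP xY yY).
- move=> S1; move: H1; rewrite -subG1; apply/negP/negPn.
  by rewrite -S1.
- move=> SGe.
  have : X != set0 by apply: contraNneq s0P => <-.
  case/set0Pn => x xX.
  have xG := subsetP (blk_sub pP XP) _ xX.
  have : x^-1 \in SG by rewrite SGe groupV.
  rewrite inE => /andP[_ /forall_inP/(_ x xX)]; rewrite mulgV => X1.
  by move: (disjointFr dXH X1); rewrite group1.
Qed.

Lemma arith (t a n al be : nat) :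
  (a + be * n = t + al * n)%N -> (t <= a)%N -> (a < n)%N -> t = a.
Proof.
move=> Eh tle altn.
case: (ltngtP al be) => [lt|lt|eab].
- have h1 : (n + al * n <= be * n)%N by rewrite -mulSn leq_mul2r lt orbT.
  by move: Eh h1; move: (al * n)%N (be * n)%N => A B; lia.
- have h1 : (n + be * n <= al * n)%N by rewrite -mulSn leq_mul2r lt orbT.
  by move: Eh h1; move: (al * n)%N (be * n)%N => A B; lia.
- by subst; lia.
Qed.

Lemma FX (gT : finGroupType) (G H : {group gT}) P X Y h z :
  is_Sring G P -> central_Sring G P -> H <| G ->
  (forall x, x \in G :\: H -> x *: H \subset x ^: G) ->
  X \in P -> Y \in P -> X != Y -> h \in X -> h \in H -> z \in X -> z \notin H ->
  1 \notin Y -> forall y, y \in Y -> y \in H -> h * y^-1 \in X.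
Proof.
move=> sP cP nH hc XP YP nXY hX hH zX zH Y1.
have [pP _ _ _] := sP.
have sHG : H \subset G by case/andP: nH.
have sXG := blk_sub pP XP; have sYG := blk_sub pP YP.
have zG := subsetP sXG _ zX; have hG := subsetP sXG _ hX.
set n := #|H|.
set T := Tset G X Y.
have E := Tconst sP XP YP XP hX zX; rewrite -/T in E.
have disj : forall w, w \in X -> w \in Y -> False.
  by move=> w wX wY; move/eqP: nXY; apply; apply: (blk_uniq pP XP YP wX wY).
have a0 : T z :&: H = set0.
  apply/setP => u; rewrite !inE; apply/negP => /andP[/and3P[uG uX uY] uH].
  have [_ kz] := sat sP cP nH hc XP zX zH (groupVr uH).
  exact: disj _ kz uY.
pose D := [set u | u^-1 * z \in H].
have bI : #|(T z :\: H) :&: D| = #|Y :&: H|.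
  rewrite -(card_imset (Y :&: H) (fun y y' (e : z * y^-1 = z * y'^-1) =>
           invg_inj (mulgI z _ _ e))).
  apply: eq_card => u; apply/idP/imsetP.
    rewrite !inE => /andP[/andP[_ /and3P[uG uX uY]] uzH].
    exists (u^-1 * z); first by rewrite inE uY.
    by rewrite invMg invgK mulgA mulgV mul1g.
  case=> y; rewrite inE => /andP[yY yH] ->.
  have [zy _] := sat sP cP nH hc XP zX zH (groupVr yH).
  rewrite !inE invMg invgK mulgKV yY yH zy andbT /=.
  apply/and3P; split => //; first last.
    by rewrite groupM ?groupV ?(subsetP sYG _ yY).
  apply/negP => zyH; move/negP: zH; apply.
  by rewrite -(mulgKV y z) groupM.
have bR : (n %| #|(T z :\: H) :\: D|)%N.
  apply: dvd_rinv => u k; rewrite !inE => /andP[uD /andP[uH /and3P[uG uX uY]]] kH.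
  have [ukX _] := sat sP cP nH hc XP uX uH kH.
  have [_ kw] := sat sP cP nH hc YP uY uD (groupVr kH).
  have ukG : u * k \in G by rewrite groupM // (subsetP sHG _ kH).
  have ukH : u * k \notin H.
    by apply: contra uH => ukH; rewrite -(mulgK k u) groupM ?groupV.
  have ukD : (u * k)^-1 * z \notin H.
    by apply: contra uD; rewrite invMg -mulgA => /(groupM kH); rewrite mulKVg.
  have ukY : (u * k)^-1 * z \in Y by rewrite invMg -mulgA.
  by rewrite ukG ukH ukD ukY ukX.
have dH : (n %| #|T h :\: H|)%N.
  apply: dvd_rinv => u k; rewrite !inE => /andP[uH /and3P[uG uX uY]] kH.
  have [ukX _] := sat sP cP nH hc XP uX uH kH.
  have wH : u^-1 * h \notin H.
    apply: contra uH => wH; rewrite -(invgK u) groupV.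
    by rewrite -(mulgK h u^-1) groupM ?groupV.
  have [_ kw] := sat sP cP nH hc YP uY wH (groupVr kH).
  have ukG : u * k \in G by rewrite groupM // (subsetP sHG _ kH).
  have ukH : u * k \notin H.
    by apply: contra uH => ukH; rewrite -(mulgK k u) groupM ?groupV.
  have ukY : (u * k)^-1 * h \in Y by rewrite invMg -mulgA.
  by rewrite ukG ukH ukY ukX.
pose phi := fun u => u^-1 * h.
have phiI : injective phi by move=> u v /mulIg /invg_inj.
have sphi : phi @: (T h :&: H) \subset Y :&: H.
  apply/subsetP => v /imsetP[u]; rewrite !inE => /andP[/and3P[uG uX uY] uH] ->.
  by rewrite /phi uY groupM ?groupV.
have tle : #|T h :&: H| <= #|Y :&: H|.
  by rewrite -(card_imset _ phiI); apply: subset_leq_card.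
have altn : #|Y :&: H| < n.
  apply: proper_card; apply/properP; split; first exact: subsetIr.
  by exists 1; rewrite ?group1 // inE negb_and Y1.
have Ez : #|T z| = #|Y :&: H| + #|(T z :\: H) :\: D|.
  by rewrite -(cardsID H (T z)) a0 cards0 add0n -bI cardsID.
have Eh : #|T h| = #|T h :&: H| + #|T h :\: H|.
  by rewrite cardsID.
have teq : #|T h :&: H| = #|Y :&: H|.
  case/dvdnP: bR => beta eb; case/dvdnP: dH => alpha ea.
  rewrite E Ez eb ea in Eh.
  exact: arith Eh tle altn.
move=> y yY yH.
have : y \in phi @: (T h :&: H).
  have : phi @: (T h :&: H) == Y :&: H.
    rewrite eqEcard sphi /=.
    by rewrite (card_imset _ phiI) teq.
  by move/eqP => ->; rewrite inE yY.
case/imsetP => u; rewrite !inE => /andP[/and3P[_ uX _] _] ->.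
by rewrite /phi invMg invgK mulgA mulgV mul1g.
Qed.

Lemma addfE (T : finType) (f g : {ffun T -> int}) x : (f + g)%R x = (f x + g x)%R.
Proof. by rewrite ffunE. Qed.

Lemma invpow (gT : finGroupType) (y : gT) : (y^-1) ^+ (#[y].-1) = y.
Proof.
have e : y ^+ (#[y].-1) * y = 1 by rewrite -expgSr prednK ?order_gt0 // expg_order.
rewrite expgVn; apply/eqP; rewrite eq_invg_mul e //.
Qed.

Lemma caseC (gT : finGroupType) (G H : {group gT}) P :
  is_Sring G P -> central_Sring G P -> H <| G ->
  (forall x, x \in G :\: H -> x *: H \subset x ^: G) ->
  (forall W, W \in P -> W != [set 1%g] -> ~~ (W \subset H) && ~~ [disjoint W & H]) ->
  forall X Y, X \in P -> Y \in P -> X != [set 1%g] -> Y != [set 1%g] -> X = Y.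
Proof.
move=> sP cP nH hc hW.
have [pP P1 _ _] := sP.
have key : forall X Y x y, X \in P -> Y \in P -> X != [set 1%g] -> Y != [set 1%g] -> X != Y ->
    x \in X -> x \in H -> y \in Y -> y \in H -> x * y \in X.
  move=> X Y x y XP YP X1 Y1 nXY xX xH yY yH.
  case/andP: (hW _ XP X1) => /subsetPn[z zX zH] _.
  have Y1' : 1 \notin Y.
    by apply: contra Y1 => Y1'; rewrite (blk_uniq pP YP P1 Y1' (set11 1)).
  have F := FX sP cP nH hc XP YP nXY _ _ zX zH Y1'.
  suff : forall k, (x * (y^-1) ^+ k \in X) && (x * (y^-1) ^+ k \in H).
    by move/(_ (#[y].-1)); rewrite invpow => /andP[].
  elim=> [|k /andP[IX IH]]; first by rewrite expg0 mulg1 xX xH.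
  rewrite expgSr mulgA F // groupM ?groupV //.
move=> X Y XP YP X1 Y1; apply/eqP; apply/negP => /negP nXY.
case/andP: (hW _ XP X1) => _; rewrite -setI_eq0 => /set0Pn[x]; rewrite inE => /andP[xX xH].
case/andP: (hW _ YP Y1) => _; rewrite -setI_eq0 => /set0Pn[y]; rewrite inE => /andP[yY yH].
have e1 := key X Y x y XP YP X1 Y1 nXY xX xH yY yH.
have nYX : Y != X by rewrite eq_sym.
have e2 := key Y X y x YP XP Y1 X1 nYX yY yH xX xH.
have xG := subsetP (blk_sub pP XP) _ xX.
have e3 := conj_inv sP cP YP e2 (groupVr xG).
rewrite conjgE invgK mulgK in e3.
by move/negP: nXY; apply; rewrite (blk_uniq pP XP YP e1 e3).
Qed.

Lemma trivP (gT : finGroupType) (G H : {group gT}) P :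
  is_Sring G P -> H \subset G -> H :!=: 1 ->
  (forall X Y, X \in P -> Y \in P -> X != [set 1%g] -> Y != [set 1%g] -> X = Y) ->
  forall a, Defs.span P a <-> trivZG G a.
Proof.
move=> sP sHG H1 uq a; have [pP P1 _ _] := sP.
have [cvP tP s0P] := partP pP.
have val : forall m n : int, forall g,
    (uline [set 1%g] *~ m + uline G *~ n)%R g =
    if g == 1 then (m + n)%R else if g \in G then n else 0%R.
  move=> m n g; rewrite addfE !ffunMzE !ffunE inE.
  case: (g =P 1) => [->|_]; first by rewrite group1 !mulrzz !GRing.mul1r.
  by case: (g \in G); rewrite ?mulrzz ?GRing.mul1r ?GRing.mul0r ?GRing.add0r ?GRing.addr0.
have blk1 : forall Y x y, Y \in P -> x \in Y -> y \in Y -> x = 1 -> y = 1.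
  move=> Y x y YP xY yY ex; rewrite ex in xY.
  have := blk_uniq pP YP P1 xY (set11 1) => eY.
  by rewrite eY inE in yY; apply/eqP.
split.
  case/(spanP _ pP) => aZ aC.
  case/trivgPn: H1 => g0 g0H g01.
  have g0G := subsetP sHG _ g0H.
  have [b0P b0] := pb_mem pP g0G.
  have b01 : pblock P g0 != [set 1%g].
    by apply: contra g01 => /eqP e; rewrite e inE in b0.
  exists (a 1%g - a g0)%R, (a g0); apply/ffunP => g; rewrite val.
  case: (g =P 1) => [->|g1]; first by rewrite GRing.subrK.
  case gG: (g \in G); last by rewrite aZ ?gG.
  have [bP bg] := pb_mem pP gG.
  have b1 : pblock P g != [set 1%g].
    by apply/eqP => e; rewrite e inE in bg; apply: g1; apply/eqP.
  have e := uq _ _ bP b0P b1 b01.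
  by apply: aC b0P _ _ _ b0; rewrite -e.
case=> m [n ->]; apply/(spanP _ pP); split.
  move=> g gG; rewrite val (negbTE gG); case: (g =P 1) => // e.
  by rewrite e group1 in gG.
move=> Y YP x y xY yY; rewrite !val.
case: (x =P 1) => [ex|nx].
  by rewrite (blk1 _ _ _ YP xY yY ex) eqxx.
case: (y =P 1) => [ey|ny].
  by case: nx; apply: blk1 YP yY xY ey.
by rewrite (subsetP (blk_sub pP YP) _ xY) (subsetP (blk_sub pP YP) _ yY).
Qed.

Theorem theorem1p5 (gT : finGroupType) (G : {group gT}) :
  Camina_group G -> generalized_B_group G.
Proof.
case=> H [nH H1 HG hc] P sP cP [_ ntriv].
have sHG : H \subset G by case/andP: nH.
case: (boolP [exists W in P, (W != [set 1%g]) && (W \subset H)]).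
  by case/exists_inP => W WP /andP[W1 WH]; apply: caseA sP sHG HG WP W1 WH.
move=> nA.
case: (boolP [exists X in P, [disjoint X & H]]).
  by case/exists_inP => X XP dXH; apply: caseB sP cP nH hc H1 XP dXH.
move=> nB _; apply: ntriv; apply: (trivP sP sHG H1).
apply: (caseC sP cP nH hc) => W WP W1.
apply/andP; split.
  by apply: contra nA => WH; apply/exists_inP; exists W => //; rewrite W1.
by apply: contra nB => dWH; apply/exists_inP; exists W.
Qed.
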